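(* Let $t<n/2$ and $S=\{\{3,4\},\{5,6\},\dots,\{2t+1,2t+2\}\}$. Then $\widehat{1_{\mathcal{F}_S}}(2(n-t,1^t))\ne 0$, where $\mathcal{F}_S=\{m\in\mathcal{M}_{2n}: S\subseteq m\}$.
   Context: $\mathcal{M}_{2n}$ is the set of perfect matchings of $K_{2n}$ on $[2n]$, with the natural action of $S_{2n}$; $m^*=\{\{1,2\},\{3,4\},\dots,\{2n-1,2n\}\}$. For $f\in\mathbb{R}[\mathcal{M}_{2n}]$ let $\tilde f(\sigma)=f(\sigma m^* )$ for $\sigma\in S_{2n}$, and for an irreducible representation $\rho$ of $S_{2n}$ let $\hat f(\rho)=\frac{1}{(2n)!}\sum_{\sigma\in S_{2n}}\tilde f(\sigma)\rho(\sigma)$. $2(n-t,1^t)$ denotes the irreducible of $S_{2n}$ indexed by the partition $(2(n-t),2,\dots,2)\vdash 2n$ with $t$ parts equal to $2$. $1_{\mathcal{F}_S}$ is the characteristic function of $\mathcal{F}_S$. *)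

(* Defs.v *)
From HB Require Import structures.
From mathcomp Require Import all_boot all_fingroup all_order all_algebra.
Set Implicit Arguments. Unset Strict Implicit. Unset Printing Implicit Defensive.
Import Order.TTheory GRing.Theory Num.Theory.
Local Open Scope ring_scope.

Definition pmatching (n : nat) (m : {set {set 'I_(2 * n)}}) : bool :=
  partition m [set: 'I_(2 * n)] && [forall e in m, #|e| == 2%N].

Definition mact (n : nat) (s : 'S_(2 * n)) (m : {set {set 'I_(2 * n)}}) :
  {set {set 'I_(2 * n)}} := [set (s @: e) | e : {set 'I_(2 * n)} in m].

(* the pair {2k+1, 2k+2} (1-indexed), i.e. {2k, 2k+1} 0-indexed *)
Definition pairk (n : nat) (k : nat) : {set 'I_(2 * n)} := [set i : 'I_(2 * n) | (nat_of_ord i)./2 == k].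

Definition mstar (n : nat) : {set {set 'I_(2 * n)}} :=
  [set pairk n k | k : 'I_n].

Definition Sset (n t : nat) : {set {set 'I_(2 * n)}} :=
  [set pairk n k | k : 'I_n & (1 <= k <= t)%N].

Definition FS (n : nat) (S : {set {set 'I_(2 * n)}}) : {set {set {set 'I_(2 * n)}}} :=
  [set m | pmatching m && (S \subset m)].

Definition indFS (R : nzRingType) (n : nat) (S : {set {set 'I_(2 * n)}})
  (m : {set {set 'I_(2 * n)}}) : R := (m \in FS S)%:R.

Definition ftilde (R : Type) (n : nat) (f : {set {set 'I_(2 * n)}} -> R)
  (s : 'S_(2 * n)) : R := f (mact s (mstar n)).

(* A shape lam = [:: l_0; l_1; ...] (a partition of N).  Position p of the
   canonical tableau (filled in reading order) lies at (row, column)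
   rowcol lam p. *)
Fixpoint rowcol (lam : seq nat) (p : nat) : nat * nat :=
  match lam with
  | [::] => (0%N, p)
  | a :: l => if (p < a)%N then (0%N, p)
              else let rc := rowcol l (p - a) in (rc.1.+1, rc.2)
  end.

(* A tabloid is recorded as the function entry |-> row. *)
Notation tabloid N := {ffun 'I_N -> 'I_N.+1}.

(* A tableau of shape lam is a permutation tau: position p holds entry tau p.
   Its tabloid {tau}: entry x lies in row (rowcol lam ((tau^-1)%g x)).1 *)
Definition tabloid_of (lam : seq nat) (N : nat) (tau : 'S_N) : tabloid N :=
  [ffun x : 'I_N => inord (rowcol lam ((tau^-1)%g x)).1].

Notation tvec R N := {ffun tabloid N -> R^o}.

Definition tdelta (R : nzRingType) (N : nat) (r : tabloid N) : tvec R N :=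
  [ffun r' => (r' == r)%:R].

(* left action of S_N on M^lam: (pi . v)(r) = v(r o pi), so that
   pi . tdelta r = tdelta (r o pi^-1) *)
Definition pact (R : nzRingType) (N : nat) (pi : 'S_N) (v : tvec R N) : tvec R N :=
  [ffun r : tabloid N => v [ffun x => r (pi x)]].

Definition colstab (lam : seq nat) (N : nat) (tau : 'S_N) : pred 'S_N :=
  [pred k : 'S_N | [forall x : 'I_N,
     (rowcol lam ((tau^-1)%g (k x))).2 == (rowcol lam ((tau^-1)%g x)).2]].

(* polytabloid e_tau = sum_{k in C_tau} sgn(k) {k o tau}
   (k o tau as functions is tau * k in mathcomp) *)
Definition polytabloid (R : nzRingType) (lam : seq nat) (N : nat) (tau : 'S_N)
  : tvec R N :=
  \sum_(k : 'S_N | colstab lam tau k) ((-1) ^+ k) *: tdelta R (tabloid_of lam (tau * k)%g).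

Definition in_specht (R : nzRingType) (lam : seq nat) (N : nat) (v : tvec R N) : Prop :=
  exists c : 'S_N -> R, v = \sum_(tau : 'S_N) c tau *: polytabloid R lam tau.

(* hat f(rho) for rho = S^lam, as the linear operator
   v |-> 1/N! sum_sigma f~(sigma) rho(sigma) v  on S^lam *)
Definition fourier (R : fieldType) (N : nat) (g : 'S_N -> R) (v : tvec R N) : tvec R N :=
  (N`!%:R)^-1 *: \sum_(s : 'S_N) g s *: pact s v.

(* the partition 2(n-t,1^t) = (2(n-t), 2, ..., 2) with t parts equal to 2 *)
Definition shape2 (n t : nat) : seq nat := (2 * (n - t))%N :: nseq t 2%N.

Definition fourier_nonzero (R : fieldType) (N : nat) (lam : seq nat) (g : 'S_N -> R) : Prop :=
  exists v : tvec R N, in_specht lam v /\ fourier g v != 0.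

(* Main.v *)
Require Import Defs.
From HB Require Import structures.
From mathcomp Require Import all_boot all_fingroup all_order all_algebra zify lra.
Import Order.TTheory GRing.Theory Num.Theory.
Set Implicit Arguments. Unset Strict Implicit. Unset Printing Implicit Defensive.

Definition rw (n t p : nat) : nat :=
  if p < 2 * (n - t) then 0 else (p - 2 * (n - t))./2.+1.
Definition cl (n t p : nat) : nat :=
  if p < 2 * (n - t) then p else nat_of_bool (odd p).
Definition pif (n t j : nat) : nat :=
  if (1 <= j <= t) then j + (n - t - 1)
  else if (n - t <= j < n) then j - (n - t - 1) else j.

Lemma rowcol_nseq t q : q < 2 * t -> rowcol (nseq t 2) q = (q./2, nat_of_bool (odd q)).
Proof.
elim: t q => [|t IH] q hq /=; first lia.
case: ifP => hq2.
  by case: q hq hq2 => [|[|q]].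
rewrite IH; last lia.
  case: q hq hq2 => [|[|q]] //= _ _; rewrite subn2 /=; congr (_, _); lia.
Qed.

Lemma rowcol_shape n t p : t < n -> p < 2 * n ->
  rowcol (shape2 n t) p = (rw n t p, cl n t p).
Proof.
move=> htn hp; rewrite /shape2 /= /rw /cl; case: ifP => // h.
rewrite rowcol_nseq; last lia.
congr (_, nat_of_bool _); lia.
Qed.

Lemma cl_odd n t y : odd (cl n t y) = odd y.
Proof. by rewrite /cl; case: ifP => //; case: (odd y). Qed.

Lemma rw_le n t p : t < n -> rw n t p <= p.
Proof. move=> h; rewrite /rw; case: ifP; lia. Qed.

Lemma pif_lt n t j : t.*2 < n -> j < n -> pif n t j < n.
Proof. move=> h hj; rewrite /pif; do ! case: ifP; lia. Qed.

Lemma pif_inv n t j : t.*2 < n -> j < n -> pif n t (pif n t j) = j.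
Proof. move=> h hj; rewrite /pif; do ! case: ifP; lia. Qed.

Lemma half_db (x : nat) (b : bool) : (x.*2 + b)./2 = x.
Proof. case: b; lia. Qed.
Lemma odd_db (x : nat) (b : bool) : odd (x.*2 + b) = b.
Proof. case: b; lia. Qed.


Lemma phi_lt n t (ht : t.*2 < n) (z : 'I_(2 * n)) :
  (pif n t z./2).*2 + odd z < 2 * n.
Proof.
have hz : (z : nat)./2 < n by have := ltn_ord z; lia.
have := pif_lt ht hz; have := ltn_ord z; case: (odd z) => /=; lia.
Qed.

Definition phif n t (ht : t.*2 < n) (z : 'I_(2 * n)) : 'I_(2 * n) :=
  Ordinal (phi_lt ht z).

Lemma phifK n t (ht : t.*2 < n) : involutive (phif ht).
Proof.
move=> z; apply: val_inj => /=.
rewrite half_db odd_db pif_inv //; last by have := ltn_ord z; lia.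
lia.
Qed.

Definition phi n t (ht : t.*2 < n) : 'S_(2 * n) := perm (inv_inj (phifK ht)).

Lemma phiE n t (ht : t.*2 < n) z : phi ht z = phif ht z.
Proof. by rewrite permE. Qed.

Lemma phiK n t (ht : t.*2 < n) z : phi ht (phi ht z) = z.
Proof. by rewrite !phiE phifK. Qed.

Lemma phi_half n t (ht : t.*2 < n) z : (phi ht z : nat)./2 = pif n t z./2.
Proof. by rewrite phiE /= half_db. Qed.

Lemma dlt_lt n (z : 'I_(2 * n)) : (if odd z then (z : nat).-1 else z.+1) < 2 * n.
Proof. have := ltn_ord z; case: ifP; lia. Qed.

Definition dltf n (z : 'I_(2 * n)) : 'I_(2 * n) := Ordinal (dlt_lt z).

Lemma dltfK n : involutive (@dltf n).
Proof. move=> z; apply: val_inj => /=; do ! case: ifP; lia. Qed.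

Definition dlt n : 'S_(2 * n) := perm (inv_inj (@dltfK n)).
Lemma dltE n z : (@dlt n z : nat) = if odd z then (z : nat).-1 else z.+1.
Proof. by rewrite permE. Qed.
Lemma dltK n z : dlt n (dlt n z) = z.
Proof. by rewrite !permE dltfK. Qed.

Lemma rw_phi n t (ht : t.*2 < n) (z : 'I_(2 * n)) j :
  rw n t (phi ht z) = j -> 1 <= j <= t -> (z : nat)./2 = j.
Proof.
move=> h hj.
have hz : (z : nat)./2 < n by have := ltn_ord z; lia.
have e : pif n t (z : nat)./2 = j + (n - t - 1).
  rewrite -phi_half; move: h; have := ltn_ord (phi ht z); rewrite /rw.
  case: ifP; lia.
rewrite -(pif_inv ht hz) e /pif; do ! case: ifP; lia.
Qed.

Lemma key n t (ht : t.*2 < n) (k s : 'S_(2 * n)) :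
  (forall x : 'I_(2 * n), cl n t (k x) = cl n t x) ->
  (forall j, 1 <= j <= t -> exists m : 'I_n, pairk n j = s @: pairk n m) ->
  (forall x : 'I_(2 * n), rw n t (phi ht (s x)) = rw n t ((k^-1)%g x)) ->
  odd_perm k = false.
Proof.
move=> Hc HS Hr.
have oddk : forall x, odd (k x) = odd x.
  by move=> x; rewrite -(cl_odd n t) Hc cl_odd.
have Hmid : forall x : 'I_(2 * n), 2 <= x < 2 * (n - t) -> (k x : nat) = x.
  move=> x hx; have := Hc x; rewrite /cl.
  case: (odd (k x)); case: (odd x); do ! case: ifP; lia.
have Hhi : forall x y : 'I_(2 * n), ~~ odd x -> 2 <= x -> (y : nat) = x.+1 ->
    (k y : nat) = (k x).+1.
  move=> x y ox x2 ey.
  have yn := ltn_ord y.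
  case: (ltnP x (2 * (n - t))) => hxa.
    rewrite !Hmid //; lia.
  set j := rw n t x.
  have hj : 1 <= j <= t by rewrite /j /rw; case: ifP; lia.
  have hry : rw n t y = j by rewrite /j /rw ey; do ! case: ifP; lia.
  have h1 := Hr (k x); rewrite permK -/j in h1.
  have h2 := Hr (k y); rewrite permK hry in h2.
  have e1 := rw_phi h1 hj; have e2 := rw_phi h2 hj.
  have [m hm] := HS j hj.
  have m1 : k x \in pairk n m.
    by rewrite -(mem_imset (pairk n m) (k x) (@perm_inj _ s)) -hm inE e1.
  have m2 : k y \in pairk n m.
    by rewrite -(mem_imset (pairk n m) (k y) (@perm_inj _ s)) -hm inE e2.
  rewrite inE in m1; rewrite inE in m2.
  have := oddk x; have := oddk y; rewrite ey.
  move: m1 m2 ox => /eqP m1 /eqP m2; lia.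
have Hpair : forall x y : 'I_(2 * n), ~~ odd x -> (y : nat) = x.+1 ->
    (k y : nat) = (k x).+1.
  move=> x y ox ey.
  case: (leqP 2 x) => x2; first exact: Hhi.
  have x0 : (x : nat) = 0 by lia.
  have kxe : ~~ odd (k x) by rewrite oddk.
  have wlt : (k x).+1 < 2 * n by have := ltn_ord (k x); lia.
  pose w : 'I_(2 * n) := Ordinal wlt.
  pose z := (k^-1)%g w.
  have kz : k z = w by rewrite /z permKV.
  have oz : odd z by rewrite -oddk kz /=; lia.
  case: (z =P y) => [<-|nzy]; first by rewrite kz.
  have z3 : 3 <= z.
    have : (z : nat) != y by apply/eqP => /val_inj.
    lia.
  have x'lt : (z : nat).-1 < 2 * n by have := ltn_ord z; lia.
  pose x' : 'I_(2 * n) := Ordinal x'lt.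
  have := Hhi x' z; rewrite kz /=.
  move=> /(_ _ _ _) h.
  have : (k x' : nat) = k x by have := h ltac:(lia) ltac:(lia) ltac:(lia); lia.
  move=> /val_inj /perm_inj /(congr1 val) /=; lia.
have comm : forall x, k (dlt n x) = dlt n (k x).
  move=> x; apply: val_inj => /=; rewrite !dltE oddk.
  case ox: (odd x).
    have dx : ~~ odd (dlt n x) by rewrite dltE ox; lia.
    rewrite (Hpair (dlt n x) x dx); first by [].
    by rewrite dltE ox; have := ltn_ord x; lia.
  apply: Hpair; first by rewrite ox.
  by rewrite dltE ox.
have k0inj : injective (fun x : 'I_(2 * n) => if odd x then x else k x).
  move=> x1 x2; case o1: (odd x1); case o2: (odd x2) => //.
  - by move=> e; move: o1; rewrite e oddk o2.
  - by move=> e; move: o2; rewrite -e oddk o1.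
  - exact: perm_inj.
pose k0 : 'S_(2 * n) := perm k0inj.
have -> : k = (k0 * k0 ^ dlt n)%g.
  have k0E : forall x, k0 x = if odd x then x else k x by move=> x; rewrite permE.
  apply/permP => x; rewrite permM -[X in (k0 ^ _)%g X]dltK permJ !k0E.
  case ox: (odd x).
    have dx : odd (dlt n x) = false by rewrite dltE ox; lia.
    by rewrite dx comm dltK.
  have dx : odd (dlt n (k x)) by rewrite dltE oddk ox /= oddk ox.
  by rewrite dx dltK.
by rewrite odd_permM odd_permJ addbb.
Qed.

Lemma card_pairk n (m : 'I_n) : #|pairk n m| = 2.
Proof.
have h1 : (m : nat).*2 < 2 * n by have := ltn_ord m; lia.
have h2 : ((m : nat).*2).+1 < 2 * n by have := ltn_ord m; lia.
have -> : pairk n m = [set Ordinal h1; Ordinal h2].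
  apply/setP => i; rewrite !inE -!val_eqE /=; lia.
rewrite cards2; suff -> : Ordinal h1 != Ordinal h2 by [].
by apply/eqP => /(congr1 val) /=; lia.
Qed.

Lemma pm_mact n (s : 'S_(2 * n)) : pmatching (Defs.mact s (mstar n)).
Proof.
rewrite /pmatching /Defs.mact; apply/andP; split.
  have eT : [set s x | x in [set: 'I_(2 * n)]] = setT.
    apply/setP => x; rewrite inE; apply/imsetP; exists ((s^-1)%g x) => //.
    by rewrite permKV.
  rewrite -eT imset_partition; last exact: perm_inj.
  rewrite /partition; apply/and3P; split.
  - apply/eqP/setP => x; rewrite inE; apply/bigcupP.
    have hx : (x : nat)./2 < n by have := ltn_ord x; lia.
    exists (pairk n (Ordinal hx)); first by apply/imsetP; exists (Ordinal hx).
    by rewrite inE.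
  - apply/trivIsetP => A B /imsetP[i _ ->] /imsetP[j _ ->] neq.
    rewrite -setI_eq0; apply/eqP/setP => x; rewrite !inE.
    apply/negP => /andP[/eqP e1 /eqP e2]; move: neq.
    have -> : i = j by apply: val_inj; rewrite /= -e1 -e2.
    by rewrite eqxx.
  - apply/imsetP => [[i _ e]].
    have hi : (i : nat).*2 < 2 * n by have := ltn_ord i; lia.
    have : Ordinal hi \in pairk n i by rewrite inE /=; lia.
    by rewrite -e inE.
apply/forallP => e; apply/implyP => /imsetP[e' /imsetP[i _ ->] ->].
by rewrite card_imset ?card_pairk //; exact: perm_inj.
Qed.

Lemma phi_pairk n t (ht : t.*2 < n) (m : 'I_n) :
  phi ht @: pairk n m = pairk n (pif n t m).
Proof.
apply/setP => y; rewrite inE; apply/imsetP/eqP => [[z]|e].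
  by rewrite inE => /eqP zm ->; rewrite phi_half zm.
exists (phi ht y); last by rewrite phiK.
by rewrite inE phi_half e pif_inv.
Qed.

Lemma Sset_sub n t (ht : t.*2 < n) : Sset n t \subset Defs.mact (phi ht) (mstar n).
Proof.
apply/subsetP => e /imsetP[j hj ->]; rewrite inE in hj.
pose m' : 'I_n := Ordinal (pif_lt ht (ltn_ord j)).
apply/imsetP; exists (pairk n m'); first by apply/imsetP; exists m'.
by rewrite phi_pairk /= pif_inv.
Qed.

Lemma rw_lt n t (htn : t < n) (x : 'I_(2 * n)) : rw n t x < (2 * n).+1.
Proof. have := rw_le x htn; have := ltn_ord x; lia. Qed.

Unset Implicit Arguments.
Local Open Scope ring_scope.

Theorem mainTheorem17 (R : realFieldType) (n t : nat) (ht : (t.*2 < n)%N) :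
  fourier_nonzero (shape2 n t)
    (ftilde (@indFS R n (Sset n t))).
Proof.
have htn : (t < n)%N by lia.
pose v := polytabloid R (shape2 n t) (1 : 'S_(2 * n))%g.
exists v; split.
  exists (fun tau : 'S_(2 * n) => ((tau == 1%g)%:R : R)).
  rewrite (bigD1 1%g) //= eqxx scale1r big1 ?addr0 // => tau /negPf ->.
  exact: scale0r.
pose r : tabloid (2 * n) := [ffun y => inord (rw n t (phi ht y))].
apply/eqP => H0; have := congr1 (fun f : tvec R (2 * n) => f r) H0; rewrite ffunE => /=.
rewrite /fourier /v /polytabloid !ffunE sum_ffunE.
under eq_bigr => s _ do rewrite !ffunE sum_ffunE.
have sE : forall a b : R, a *: (b : R^o) = a * b by [].
under eq_bigr => s _ do under eq_bigr => k _ do rewrite !ffunE.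
rewrite !sE.
under eq_bigr => s _ do rewrite sE.
under eq_bigr => s _ do under eq_bigr => k _ do rewrite sE.
set g := ftilde (indFS R (Sset n t)).
have Tnn : forall s k, colstab (shape2 n t) 1 k -> 0 <= g s * ((-1) ^+ k *
   (([ffun x => r (s x)] == tabloid_of (shape2 n t) (1 * k)%g)%:R)).
  move=> s k hk.
  rewrite /g /ftilde /indFS.
  case hF: (Defs.mact s (mstar n) \in FS (Sset n t)); last by rewrite mul0r.
  case he: (_ == _); last by rewrite !mulr0.
  suff -> : odd_perm k = false by rewrite /= expr0 !mulr1.
  apply: (@key n t ht k s).
  - move=> x; move/forallP: hk => /(_ x) /eqP.
    by rewrite invg1 !perm1 !rowcol_shape.
  - move=> j hj; move: hF; rewrite inE => /andP[_ sub].
    have jn : (j < n)%N by lia.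
    have : pairk n j \in Sset n t by apply/imsetP; exists (Ordinal jn); rewrite ?inE.
    move/(subsetP sub) => /imsetP[e /imsetP[m _ ->] ->]; by exists m.
  - move=> x; move/eqP/ffunP: he => /(_ x); rewrite !ffunE mul1g rowcol_shape //=.
    by move=> /(congr1 val) /=; rewrite !inordK ?rw_lt.
have gphi : g (phi ht) = 1.
  by rewrite /g /ftilde /indFS inE pm_mact Sset_sub.
have c1 : colstab (shape2 n t) 1 (1 : 'S_(2 * n))%g.
  by apply/forallP => x; rewrite perm1.
have Tphi : (([ffun x => r (phi ht x)] == tabloid_of (shape2 n t) (1 * 1)%g) = true).
  apply/eqP/ffunP => x; rewrite !ffunE phiK mul1g invg1 perm1 rowcol_shape //.
pose T s := g s * \sum_(k | colstab (shape2 n t) 1 k) (-1) ^+ k *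
        ([ffun x => r (s x)] == tabloid_of (shape2 n t) (1 * k)%g)%:R.
have Tge : forall s, 0 <= T s.
  by move=> s; rewrite /T mulr_sumr; apply: sumr_ge0 => k hk; apply: Tnn.
have Tgt : 0 < T (phi ht).
  rewrite /T mulr_sumr (bigD1 1%g) //= Tphi odd_perm1 /= expr0 gphi !mul1r.
  have : 0 <= \sum_(i | colstab (shape2 n t) 1 i && (i != 1%g))
     g (phi ht) * ((-1) ^+ i * ([ffun x => r (phi ht x)] == tabloid_of (shape2 n t) (1 * i)%g)%:R).
    by apply: sumr_ge0 => k /andP[hk _]; apply: Tnn.
  rewrite gphi; lra.
have pos : 0 < \sum_s T s.
  rewrite (bigD1 (phi ht)) //=.
  have : 0 <= \sum_(s | s != phi ht) T s by apply: sumr_ge0 => s _; apply: Tge.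
  lra.
move=> h.
have : 0 < (2 * n)`!%:R^-1 * \sum_s T s.
  by apply: mulr_gt0 => //; rewrite invr_gt0 ltr0n fact_gt0.
by rewrite h ltxx.
Qed.
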